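(* For any legal abstract path $\tau$, $w(\tau)=1+O(\tau)+B(\tau)$. In particular, a legal abstract path has weight $1$ if and only if it consists of a single interior abstract edge.
   Context: $\mathbb F=\{0,1\}$, $\mathbb N=\{0,1,2,\dots\}$. Abstract vertex types: $o$ (interior), $u$ (unstable), $s$ (stable). An abstract edge is $\varepsilon=(\mu,(o_1,u_1,s_1),(o_2,u_2,s_2))\in\mathbb F\times\mathbb N^3\times\mathbb N^3$ such that if $\mu=0$ then $s_1=u_2=0$, and if $\mu=1$ then $o_1=o_2=0$ (interior if $\mu=0$, boundary if $\mu=1$). Weight: $w(\varepsilon)=1$ if $\mu=0$, $2-s_1-u_2$ if $\mu=1$. An abstract path $\tau=(T,\tau,\sigma)$: a non-empty finite directed tree $T=(V,E)$ (nodes; arrows, also called breaks), $\tau:V\to$ abstract edges, $\sigma:E\to\{o,u,s\}$, such that for every node $v$ and type $X\in\{o,u,s\}$, $X_1(v)\ge|\{e:t(e)=v,\sigma(e)=X\}|$ and $X_2(v)\ge|\{e:s(e)=v,\sigma(e)=X\}|$, with $X_i(v)$ the entries of $\tau(v)$. Ends: $X_1(\tau)=\sum_vX_1(v)-|\sigma^{-1}(X)|$, $X_2(\tau)=\sum_vX_2(v)-|\sigma^{-1}(X)|$. $\tau$ is legal if $s_1(\tau)=u_2(\tau)=0$. Weight $w(\tau)=\sum_vw(\tau(v))$. $O(\tau)=|\sigma^{-1}(o)|$ is the number of interior breaks and $B(\tau)$ the number of nodes $v$ with $\mu(v)=1$ (boundary edges). *)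

(* Defs.v *)
From HB Require Import structures.
From mathcomp Require Import all_boot all_order all_algebra.
Set Implicit Arguments. Unset Strict Implicit. Unset Printing Implicit Defensive.
Import GRing.Theory Num.Theory.
Local Open Scope ring_scope.
Local Open Scope nat_scope.

(* Abstract vertex types o (interior), u (unstable), s (stable). *)
Inductive vtype := VO | VU | VS.

Definition vtype_eqb (a b : vtype) : bool :=
  match a, b with VO, VO | VU, VU | VS, VS => true | _, _ => false end.
Lemma vtype_eqP : Equality.axiom vtype_eqb.
Proof. by case; case; constructor. Qed.
HB.instance Definition _ := hasDecEq.Build vtype vtype_eqP.

(* An abstract edge (mu, (o1,u1,s1), (o2,u2,s2)); mu = false is mu = 0
   (interior edge), mu = true is mu = 1 (boundary edge). *)
Record aedge := AEdge {
  mu : bool;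
  o1 : nat; u1 : nat; s1 : nat;
  o2 : nat; u2 : nat; s2 : nat }.

Definition aedge_valid (a : aedge) : Prop :=
  (mu a = false -> s1 a = 0%N /\ u2 a = 0%N) /\
  (mu a = true -> o1 a = 0%N /\ o2 a = 0%N).

Definition X1 (a : aedge) (X : vtype) : nat :=
  match X with VO => o1 a | VU => u1 a | VS => s1 a end.
Definition X2 (a : aedge) (X : vtype) : nat :=
  match X with VO => o2 a | VU => u2 a | VS => s2 a end.

Definition aweight (a : aedge) : int :=
  if mu a then (2%:Z - (s1 a)%:Z - (u2 a)%:Z)%R else (1%:Z)%R.

Section Graph.
Variables (V E : finType) (src tgt : E -> V).

Definition uadj : rel V := fun a b =>
  [exists e : E, ((src e == a) && (tgt e == b)) || ((src e == b) && (tgt e == a))].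

Definition gconnected : Prop := forall x y : V, connect uadj x y.

(* traversal of an arrow, forwards (true) or backwards (false) *)
Definition tstart (p : E * bool) : V := if p.2 then src p.1 else tgt p.1.
Definition tend (p : E * bool) : V := if p.2 then tgt p.1 else src p.1.

Definition closed_trail (w : seq (E * bool)) : Prop :=
  [/\ w != [::], uniq (map fst w),
      (forall p0 i, (i.+1 < size w)%N ->
         tend (nth p0 w i) = tstart (nth p0 w i.+1)) &
      (forall p0, tend (last p0 w) = tstart (head p0 w))].

Definition gacyclic : Prop := forall w, ~ closed_trail w.

Definition dtree : Prop := [/\ (0 < #|V|)%N, gconnected & gacyclic].
End Graph.

Section AbstractPath.
Variables (V E : finType) (src tgt : E -> V) (tau : V -> aedge) (sigma : E -> vtype).

Definition in_count (v : V) (X : vtype) : nat :=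
  #|[set e : E | (tgt e == v) && (sigma e == X)]|.
Definition out_count (v : V) (X : vtype) : nat :=
  #|[set e : E | (src e == v) && (sigma e == X)]|.

Definition abstract_path : Prop :=
  [/\ dtree src tgt,
      (forall v, aedge_valid (tau v)) &
      (forall v X, in_count v X <= X1 (tau v) X /\ out_count v X <= X2 (tau v) X)%N].

Definition nbreaks (X : vtype) : nat := #|[set e : E | sigma e == X]|.

Definition end1 (X : vtype) : nat := ((\sum_(v : V) X1 (tau v) X) - nbreaks X)%N.
Definition end2 (X : vtype) : nat := ((\sum_(v : V) X2 (tau v) X) - nbreaks X)%N.

Definition legal : Prop := end1 VS = 0%N /\ end2 VU = 0%N.

Definition pweight : int := \sum_(v : V) aweight (tau v).

Definition Obreaks : nat := nbreaks VO.
Definition Bnodes : nat := #|[set v : V | mu (tau v)]|.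
End AbstractPath.

(* Main.v *)
Require Import Defs.
From mathcomp Require Import all_boot all_order all_algebra.
From mathcomp Require Import zify.
Import GRing.Theory Num.Theory.
Set Implicit Arguments. Unset Strict Implicit. Unset Printing Implicit Defensive.
Local Open Scope ring_scope.
Local Open Scope nat_scope.

Section Walk.
Variables (V E : finType) (src tgt : E -> V).
Local Notation ts := (tstart src tgt).
Local Notation te := (tend src tgt).

Fixpoint walkto (x y : V) (w : seq (E * bool)) : bool :=
  match w with [::] => x == y | q :: w' => (ts q == x) && walkto (te q) y w' end.

Definition flip (q : E * bool) : E * bool := (q.1, ~~ q.2).

Lemma walkto_cat x y z w1 w2 : walkto x y w1 -> walkto y z w2 -> walkto x z (w1 ++ w2).
Proof.
elim: w1 x => [|q w1 IH] x /=; first by move=> /eqP ->.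
by move=> /andP [-> H1] H2; rewrite IH.
Qed.

Lemma walkto_rev x y w : walkto x y w -> walkto y x (rev (map flip w)).
Proof.
elim: w x => [|q w IH] x /=; first by move=> /eqP ->; rewrite /= eqxx.
move=> /andP [/eqP Hq H]; rewrite rev_cons -cats1.
apply: walkto_cat (IH _ H) _.
rewrite /= /flip /tstart /tend /=; move: Hq; rewrite /tstart /tend.
by case: (q.2) => /= ->; rewrite !eqxx.
Qed.

Lemma walkto_nth x y w p0 i : walkto x y w -> i.+1 < size w ->
  te (nth p0 w i) = ts (nth p0 w i.+1).
Proof.
elim: w x i => [|q w IH] x i //=.
move=> /andP [_ H]; case: i => [|i] /=.
  by case: w H {IH} => [|q' w'] //= /andP [/eqP -> _].
by move=> Hi; apply: IH H _.
Qed.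

Lemma walkto_last x y w p0 : walkto x y w -> w != [::] -> te (last p0 w) = y.
Proof.
elim: w x p0 => [|q w IH] x p0 //= /andP [_ H] _.
case: w H IH => [|q' w'] /=; first by move=> /eqP.
by move=> H IH; apply: (IH _ q H).
Qed.

Lemma walkto_closed x w : walkto x x w -> w != [::] -> closed_trail src tgt w <-> uniq (map fst w).
Proof.
move=> H Hn; split; first by case.
move=> Hu; split => //.
  move=> p0 i Hi; exact: (walkto_nth p0 H Hi).
move=> p0; rewrite (walkto_last p0 H Hn).
by clear Hu; case: w H Hn => [|q w] //= /andP [/eqP ->].
Qed.
End Walk.
Arguments flip {E}.

Section Tree.
Variables (V E : finType) (src tgt : E -> V).
Hypothesis hconn : gconnected src tgt.
Variable r : V.

Local Notation adj := (uadj src tgt).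

Lemma adj_sym x y : adj x y = adj y x.
Proof.
apply/existsP/existsP => -[e He]; exists e; by rewrite orbC.
Qed.

Definition reach v n := [exists t : n.-tuple V, path adj v t && (last v t == r)].

Lemma reach_ex v : exists n, reach v n.
Proof.
have /connectP [q Hq Hl] := hconn v r.
exists (size q); apply/existsP; exists (in_tuple q); by rewrite Hq -Hl eqxx.
Qed.

Definition dep v := ex_minn (reach_ex v).

Lemma dep_r : dep r = 0.
Proof.
rewrite /dep; case: ex_minnP => m _ Hm; apply/eqP; rewrite -leqn0; apply: Hm.
apply/existsP; exists [tuple]; by rewrite /= eqxx.
Qed.

Lemma dep0 v : dep v = 0 -> v = r.
Proof.
rewrite /dep; case: ex_minnP => m /existsP [t /andP [_ /eqP Hl]] _ Hm.
move: t Hl; rewrite Hm => t; by rewrite tuple0.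
Qed.

Lemma dep_adj v y : adj v y -> dep v <= (dep y).+1.
Proof.
move=> Hvy; rewrite {2}/dep; case: ex_minnP => m /existsP [t /andP [Hp Hl]] _.
rewrite /dep; case: ex_minnP => m' _ Hm; apply: Hm.
apply/existsP; exists [tuple of y :: t]; by rewrite /= Hvy Hp.
Qed.

Lemma dep_down v : v != r -> exists y, adj v y && (dep y < dep v).
Proof.
move=> Hv; rewrite {2}/dep; case: ex_minnP => m /existsP [t /andP [Hp Hl]] _.
case: t Hp Hl => -[|y s] Hs /=.
  by move=> _ /eqP Hr; rewrite Hr eqxx in Hv.
move=> /andP [Hvy Hp] Hl; exists y; rewrite Hvy /=.
have Hs' : size s == m.-1 by move: Hs => /= /eqP <-.
rewrite /dep; case: ex_minnP => m' _ Hm.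
have : m' <= m.-1.
  apply: Hm; apply/existsP; exists (Tuple Hs'); by rewrite /= Hp Hl.
move: Hs => /= /eqP <-; by move=> /= ?; lia.
Qed.

Definition par v := odflt r [pick y | adj v y && (dep y < dep v)].

Lemma par_spec v : v != r -> adj v (par v) /\ dep (par v) = (dep v).-1.
Proof.
move=> Hv; rewrite /par; case: pickP => [y /andP [Hy Hd] | H] /=.
  have := dep_adj Hy; split => //; lia.
by have [y Hy] := dep_down Hv; rewrite H in Hy.
Qed.

Lemma dep_par v : dep (par v) = (dep v).-1.
Proof.
case: (eqVneq v r) => [->|Hv]; last by case: (par_spec Hv).
rewrite /par; case: pickP => [y /andP [_]|] /=; by rewrite dep_r.
Qed.

Lemma dep_iter k v : dep (iter k par v) = dep v - k.
Proof.
elim: k => [|k IH]; first by rewrite subn0.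
by rewrite iterS dep_par IH; lia.
Qed.

Lemma iter_dep v : iter (dep v) par v = r.
Proof. apply: dep0; by rewrite dep_iter subnn. Qed.

Definition ecnd v e := ((src e == v) && (tgt e == par v)) || ((src e == par v) && (tgt e == v)).
Definition pe v := [pick e | ecnd v e].

Lemma dep_pos v : v != r -> 0 < dep v.
Proof. move=> Hv; rewrite lt0n; apply/eqP => /dep0 H; by rewrite H eqxx in Hv. Qed.

Lemma pe_some v : v != r -> exists e, pe v = Some e.
Proof.
move=> Hv; have [/existsP [e He] _] := par_spec Hv.
rewrite /pe; case: pickP => [e' _|H]; first by exists e'.
by move: (H e); rewrite /ecnd He.
Qed.

Lemma pe_spec v e : pe v = Some e -> ecnd v e.
Proof. rewrite /pe; case: pickP => [e' He [<-] //|//]. Qed.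

Lemma pe_inj v w e : v != r -> w != r -> pe v = Some e -> pe w = Some e -> v = w.
Proof.
move=> Hv Hw /pe_spec Hve /pe_spec Hwe.
case: (eqVneq v w) => // Hne.
have Dv := dep_par v; have Dw := dep_par w.
have Pv := dep_pos Hv; have Pw := dep_pos Hw.
suff [E1 E2] : v = par w /\ w = par v.
  by move: Dv Dw; rewrite -E1 -E2; lia.
move: Hve Hwe; rewrite /ecnd.
case/orP => /andP [/eqP H1 /eqP H2]; case/orP => /andP [/eqP H3 /eqP H4].
- by rewrite -H1 -H3 eqxx in Hne.
- by split; congruence.
- by split; congruence.
- by rewrite -H2 -H4 eqxx in Hne.
Qed.

Fixpoint upv x k := if k is k'.+1 then x :: upv (par x) k' else [::].

Lemma upv_mem x k v : v \in upv x k -> exists2 l, l < k & v = iter l par x.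
Proof.
elim: k x => [|k IH] x //=; rewrite inE => /orP [/eqP ->|]; first by exists 0.
by move=> /IH [l Hl ->]; exists l.+1 => //; rewrite iterSr.
Qed.

Lemma upv_dep x k v : k <= dep x -> v \in upv x k -> dep x - k < dep v.
Proof.
move=> Hk /upv_mem [l Hl ->]; rewrite dep_iter; lia.
Qed.

Lemma upv_nr x k v : k <= dep x -> v \in upv x k -> v != r.
Proof.
move=> Hk Hv; have := upv_dep Hk Hv; apply: contraTneq => ->; by rewrite dep_r.
Qed.

Lemma upv_uniq x k : k <= dep x -> uniq (upv x k).
Proof.
elim: k x => [|k IH] x //= Hk.
have Dp := dep_par x.
rewrite IH; last lia.
rewrite andbT; apply/negP => Hx.
have [l _ Hl] := upv_mem Hx.
have := dep_iter l (par x); rewrite -Hl; lia.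
Qed.

Section Up.
Variable e0 : E.
Definition g v := odflt e0 (pe v).
Fixpoint upw x k := if k is k'.+1 then (g x, src (g x) == x) :: upw (par x) k' else [::].

Lemma map_fst_upw x k : map fst (upw x k) = map g (upv x k).
Proof. by elim: k x => [|k IH] x //=; rewrite IH. Qed.

Lemma upw_walk x k : k <= dep x -> walkto src tgt x (iter k par x) (upw x k).
Proof.
elim: k x => [|k IH] x Hk /=; first by [].
have Hx : x != r by apply/eqP => Hx; move: Hk; rewrite Hx dep_r.
have [e He] := pe_some Hx.
have Hc := pe_spec He.
rewrite /g He /=.
have Dp := dep_par x.
have -> : tstart src tgt (e, src e == x) = x.
  rewrite /tstart /=; case: eqP => // Hs.
  by move: Hc; rewrite /ecnd; case/orP => /andP [/eqP ? /eqP ?].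
rewrite eqxx /=.
have -> : tend src tgt (e, src e == x) = par x.
  rewrite /tend /=; move: Hc; rewrite /ecnd.
  by case: eqP => Hs; case/orP => /andP [/eqP H1 /eqP H2] //; congruence.
rewrite -iterS iterSr; apply: IH; lia.
Qed.
End Up.

Hypothesis hacyc : gacyclic src tgt.

Lemma pe_surj e : exists2 v, v != r & pe v = Some e.
Proof.
case: (boolP [exists v, (v != r) && (pe v == Some e)]).
  by move=> /existsP [v /andP [Hv /eqP He]]; exists v.
move=> /existsPn Hn; exfalso.
set a := src e; set b := tgt e.
pose P k := [exists l : 'I_(dep a).+1, iter l par a == iter k par b].
have HP : exists k, P k.
  exists (dep b); apply/existsP; exists ord_max; by rewrite /= !iter_dep.
case: (ex_minnP HP) => j /existsP [l0 /eqP Hl0] Hmin.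
have Hj : j <= dep b.
  apply: Hmin; apply/existsP; exists ord_max; by rewrite /= !iter_dep.
have Hi : l0 <= dep a by have := ltn_ord l0.
pose W := (e, true) :: upw e b j ++ rev (map flip (upw e a l0)).
have Hw : walkto src tgt a a W.
  rewrite /W /= /tstart /tend /= eqxx /=.
  apply: walkto_cat (upw_walk e Hj) _.
  rewrite -Hl0; exact: walkto_rev (upw_walk e Hi).
apply: (hacyc (w := W)).
apply/(walkto_closed Hw) => //.
have Hmf : map fst (rev (map flip (upw e a l0))) = rev (map fst (upw e a l0)).
  by rewrite map_rev -map_comp.
rewrite /W /= map_cat Hmf !map_fst_upw.
have Hdisj : forall v, v \in upv b j -> v \in upv a l0 -> False.
  move=> v /upv_mem [k Hk ->] /upv_mem [l Hl Hv].
  have : j <= k.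
    apply: Hmin; apply/existsP.
    have Hl' : l < (dep a).+1 by lia.
    by exists (Ordinal Hl'); rewrite /= Hv.
  lia.
have Hnr : forall v, v \in upv b j ++ upv a l0 -> v != r.
  move=> v; rewrite mem_cat => /orP [] Hv.
    exact: upv_nr Hj Hv.
  exact: upv_nr Hi Hv.
have Hinj : {in upv b j ++ upv a l0 &, injective (g e)}.
  move=> v w Hv Hw' Hg.
  have [ev Hev] := pe_some (Hnr _ Hv); have [ew Hew] := pe_some (Hnr _ Hw').
  move: Hg; rewrite /g Hev Hew /= => Heq; subst ew.
  exact: pe_inj (Hnr _ Hv) (Hnr _ Hw') Hev Hew.
apply/andP; split.
  rewrite mem_cat mem_rev -mem_cat -map_cat.
  apply/mapP => -[v Hv Hev].
  have [ev Hpe] := pe_some (Hnr _ Hv).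
  move: Hev; rewrite /g Hpe /= => Hev; subst ev.
  by move: (Hn v); rewrite (Hnr _ Hv) Hpe eqxx.
rewrite cat_uniq rev_uniq has_rev -cat_uniq -map_cat.
rewrite (map_inj_in_uniq Hinj) cat_uniq (upv_uniq Hj) (upv_uniq Hi) /= andbT.
apply/hasPn => v Hv; apply/negP => Hv'; exact: Hdisj Hv' Hv.
Qed.

Lemma card_tree : #|E| = #|V|.-1.
Proof.
rewrite -(cardsC1 r).
have Hinj : {in [set~ r] &, injective pe}.
  move=> v w; rewrite !in_setC1 => Hv Hw Heq.
  have [e He] := pe_some Hv; apply: (pe_inj Hv Hw He); by rewrite -Heq.
rewrite -(card_in_imset Hinj).
have -> : pe @: [set~ r] = Some @: [set: E].
  apply/setP => -[e|]; apply/imsetP/imsetP.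
  - by move=> _; exists e.
  - by move=> _; have [v Hv He] := pe_surj e; exists v; rewrite ?in_setC1.
  - by move=> [v]; rewrite in_setC1 => Hv; have [e He] := pe_some Hv; rewrite He.
  - by move=> [].
rewrite card_imset; last by move=> x y [].
by rewrite cardsT.
Qed.

End Tree.

Lemma card_sum_nat (T : finType) (P : pred T) : #|[set x | P x]| = \sum_(x : T) (P x : nat).
Proof.
rewrite -sum1_card big_mkcond /=; apply: eq_bigr => x _; by rewrite inE; case: (P x).
Qed.

Lemma sumz (T : finType) (F : T -> nat) : ((\sum_(x : T) F x)%:Z = \sum_(x : T) (F x)%:Z)%R.
Proof. by rewrite (big_morph Posz PoszD (erefl _)). Qed.

Lemma nbreaks_part (V E : finType) (f : E -> V) (sigma : E -> vtype) X :
  nbreaks sigma X = \sum_(v : V) #|[set e : E | (f e == v) && (sigma e == X)]|.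
Proof.
rewrite /nbreaks card_sum_nat.
under [RHS]eq_bigr do rewrite card_sum_nat.
rewrite exchange_big /=; apply: eq_bigr => e _.
rewrite (bigD1 (f e)) //= eqxx /= big1 ?addn0 // => v Hv.
by rewrite eq_sym (negbTE Hv).
Qed.

Theorem proposition3p10 (V E : finType) (src tgt : E -> V)
    (tau : V -> aedge) (sigma : E -> vtype) :
  abstract_path src tgt tau sigma ->
  legal tau sigma ->
  pweight tau = (1 + (Obreaks sigma)%:Z + (Bnodes tau)%:Z)%R /\
  (pweight tau = 1%:Z <-> (#|V| = 1%N /\ forall v : V, mu (tau v) = false)).
Proof.
move=> [[hV hconn hacyc] hvalid hcount] [hl1 hl2].
have [r _] := card_gt0P hV.
have hT := card_tree hconn r hacyc.
set SO := \sum_(v : V) s1 (tau v).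
set UU := \sum_(v : V) u2 (tau v).
have hS : SO = nbreaks sigma VS.
  have : nbreaks sigma VS <= SO.
    rewrite (nbreaks_part tgt); apply: leq_sum => v _; exact: (hcount v VS).1.
  move: hl1; rewrite /end1 /= -/SO; lia.
have hU : UU = nbreaks sigma VU.
  have : nbreaks sigma VU <= UU.
    rewrite (nbreaks_part src); apply: leq_sum => v _; exact: (hcount v VU).2.
  move: hl2; rewrite /end2 /= -/UU; lia.
have hE : #|E| = nbreaks sigma VO + nbreaks sigma VU + nbreaks sigma VS.
  rewrite /nbreaks !card_sum_nat -!big_split /= -sum1_card.
  by apply: eq_bigr => e _; case: (sigma e).
have hB : Bnodes tau = \sum_(v : V) (mu (tau v) : nat).
  by rewrite /Bnodes card_sum_nat.
have hW : (pweight tau + (SO + UU)%:Z = (#|V| + Bnodes tau)%:Z)%R.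
  have hcV : #|V| = \sum_(v : V) 1%N by rewrite -sum1_card; apply: eq_bigl.
  rewrite hB hcV /pweight /SO /UU -!big_split /= !sumz -big_split /=.
  apply: eq_bigr => v _; rewrite /aweight.
  have [h0 h1] := hvalid v.
  case: (mu (tau v)) h0 h1 => h0 h1 /=; first lia.
  have [-> ->] := h0 erefl; lia.
have hVn : #|V| = (1 + nbreaks sigma VO + nbreaks sigma VU + nbreaks sigma VS)%N by lia.
have hmain : pweight tau = (1 + (Obreaks sigma)%:Z + (Bnodes tau)%:Z)%R.
  rewrite /Obreaks; move: hW; rewrite hVn hS hU; lia.
split => //; split.
- move=> h1.
  have hB0 : Bnodes tau = 0 by move: hmain; rewrite h1; lia.
  have hO0 : Obreaks sigma = 0 by move: hmain; rewrite h1; lia.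
  have hmu : forall v, mu (tau v) = false.
    move=> v; apply/negP => hv.
    have : v \in [set v | mu (tau v)] by rewrite inE.
    by rewrite (cards0_eq hB0) inE.
  have hSO : SO = 0.
    rewrite /SO big1 // => v _; have [h0 _] := hvalid v; by have [-> _] := h0 (hmu v).
  have hUU : UU = 0.
    rewrite /UU big1 // => v _; have [h0 _] := hvalid v; by have [_ ->] := h0 (hmu v).
  split => //; move: hO0; rewrite /Obreaks; lia.
- move=> [h1 hmu].
  have hB0 : Bnodes tau = 0.
    rewrite hB big1 // => v _; by rewrite hmu.
  rewrite hmain hB0; move: h1 hT hE; rewrite /Obreaks; lia.
Qed.
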